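(* Let $\mathbf{s}=\{1/n : n\in\mathbb{N}\}\cup\{0\}\subset\mathbb{R}$ with the topology induced from $\mathbb{R}$, and let $L(\mathbf{s})$ be the free locally convex space over $\mathbf{s}$. Then $L(\mathbf{s})$ is not a Mackey space. Consequently, $L(\mathbf{s})$ (regarded as an abelian topological group) is not a Mackey group.
   Context: All vector spaces are real. For a Tychonoff space $X$, the free locally convex space $L(X)$ is a locally convex space together with a continuous map $i:X\to L(X)$ such that every continuous map $f$ from $X$ into a locally convex space $E$ extends uniquely to a continuous linear operator $\bar f:L(X)\to E$ with $f=\bar f\circ i$; algebraically $L(X)$ is the free vector space on $X$. A locally convex vector topology $\nu$ on a vector space $E$ is compatible with a locally convex topology $\tau$ if $(E,\tau)$ and $(E,\nu)$ have the same continuous linear functionals. A locally convex space $(E,\tau)$ is a Mackey space if $\tau$ is the finest locally convex vector topology on $E$ compatible with $\tau$. Let $\mathbb{S}$ be the unit circle group and $\mathbb{S}_+=\{z\in\mathbb{S}:\mathrm{Re}(z)\ge 0\}$. For an abelian topological group $G$, $\widehat{G}$ denotes the group of continuous homomorphisms $G\to\mathbb{S}$ (characters). A subset $A\subseteq G$ is quasi-convex if for every $g\in G\setminus A$ there is $\chi\in\widehat G$ with $\chi(A)\subseteq\mathbb{S}_+$ and $\chi(g)\notin\mathbb{S}_+$. $G$ is locally quasi-convex if it has a neighborhood base at $0$ of quasi-convex sets. Two group topologies on an abelian group are compatible if they yield the same group of continuous characters. A locally quasi-convex abelian group $(G,\mu)$ is a Mackey group if every locally quasi-convex group topology $\nu$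 on $G$ compatible with $\mu$ satisfies $\nu\le\mu$. *)

(* Defs.v *)
From Stdlib Require Import Reals Lra.
Open Scope R_scope.

Record topology (T : Type) := {
  open : (T -> Prop) -> Prop;
  open_full : open (fun _ => True);
  open_inter : forall U V, open U -> open V -> open (fun x => U x /\ V x);
  open_union : forall (I : Type) (F : I -> T -> Prop),
      (forall i, open (F i)) -> open (fun x => exists i, F i x)
}.
Arguments open {T} _ _.

Definition coarser {T} (tau1 tau2 : topology T) : Prop :=
  forall U, open tau1 U -> open tau2 U.

Definition continuous {A B} (ta : topology A) (tb : topology B) (f : A -> B) : Prop :=
  forall V, open tb V -> open ta (fun x => V (f x)).

Definition nbhd {T} (t : topology T) (N : T -> Prop) (x : T) : Prop :=
  exists U, open t U /\ U x /\ (forall y, U y -> N y).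

Definition R_open (U : R -> Prop) : Prop :=
  forall x, U x -> exists eps, eps > 0 /\ forall y, Rabs (y - x) < eps -> U y.

Definition R_topology : topology R.
Proof.
  refine {| open := R_open |}.
  - intros x _. exists 1. split; [lra|]. auto.
  - intros U V HU HV x [Ux Vx].
    destruct (HU x Ux) as [e1 [He1 H1]]; destruct (HV x Vx) as [e2 [He2 H2]].
    exists (Rmin e1 e2). split; [apply Rmin_pos; assumption|].
    intros y Hy. split; [apply H1 | apply H2];
      eapply Rlt_le_trans; eauto; [apply Rmin_l | apply Rmin_r].
  - intros I F HF x [i Hi]. destruct (HF i x Hi) as [e [He H]].
    exists e. split; auto. intros y Hy. exists i. auto.
Defined.

Definition in_s (x : R) : Prop :=
  x = 0 \/ exists n : nat, (1 <= n)%nat /\ x = / INR n.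

Definition s_pt : Type := { x : R | in_s x }.

Definition s_topology : topology s_pt.
Proof.
  refine {| open := fun U : s_pt -> Prop =>
              exists V, R_open V /\ forall x : s_pt, U x <-> V (proj1_sig x) |}.
  - exists (fun _ => True). split; [apply (open_full _ R_topology)|]. tauto.
  - intros U V [U' [HU' EU]] [V' [HV' EV]].
    exists (fun x => U' x /\ V' x). split.
    + apply (open_inter _ R_topology); assumption.
    + intro x. rewrite EU, EV. tauto.
  - intros I F HF.
    exists (fun r => exists i, exists V, R_open V /\ (forall x : s_pt, F i x <-> V (proj1_sig x)) /\ V r).
    split.
    + intros r [i [V [HV [EV Vr]]]]. destruct (HV r Vr) as [e [He H]].
      exists e. split; auto. intros y Hy. exists i, V. auto.
    + intro x. split.
      * intros [i Hi]. destruct (HF i) as [V [HV EV]]. exists i, V.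
        split; [exact HV|]. split; [exact EV|]. apply EV; exact Hi.
      * intros [i [V [HV [EV Vr]]]]. exists i. apply EV. auto.
Defined.

Record vector_space (E : Type) := {
  vzero : E;
  vadd : E -> E -> E;
  vopp : E -> E;
  vscal : R -> E -> E;
  vadd_assoc : forall x y z, vadd x (vadd y z) = vadd (vadd x y) z;
  vadd_comm : forall x y, vadd x y = vadd y x;
  vadd_0 : forall x, vadd x vzero = x;
  vadd_opp : forall x, vadd x (vopp x) = vzero;
  vscal_1 : forall x, vscal 1 x = x;
  vscal_assoc : forall a b x, vscal a (vscal b x) = vscal (a * b) x;
  vscal_distr_v : forall a x y, vscal a (vadd x y) = vadd (vscal a x) (vscal a y);
  vscal_distr_s : forall a b x, vscal (a + b) x = vadd (vscal a x) (vscal b x)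
}.
Arguments vzero {E} _.
Arguments vadd {E} _ _ _.
Arguments vopp {E} _ _.
Arguments vscal {E} _ _ _.

Definition linear {E F} (VE : vector_space E) (VF : vector_space F) (g : E -> F) : Prop :=
  (forall x y, g (vadd VE x y) = vadd VF (g x) (g y)) /\
  (forall a x, g (vscal VE a x) = vscal VF a (g x)).

Definition linear_functional {E} (VE : vector_space E) (f : E -> R) : Prop :=
  (forall x y, f (vadd VE x y) = f x + f y) /\ (forall a x, f (vscal VE a x) = a * f x).

Definition convex {E} (VE : vector_space E) (C : E -> Prop) : Prop :=
  forall x y t, C x -> C y -> 0 <= t <= 1 ->
    C (vadd VE (vscal VE t x) (vscal VE (1 - t) y)).

Definition add_continuous {E} (VE : vector_space E) (t : topology E) : Prop :=
  forall x y W, open t W -> W (vadd VE x y) ->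
    exists U V, open t U /\ U x /\ open t V /\ V y /\
      forall u v, U u -> V v -> W (vadd VE u v).

Definition scal_continuous {E} (VE : vector_space E) (t : topology E) : Prop :=
  forall a x W, open t W -> W (vscal VE a x) ->
    exists delta U, delta > 0 /\ open t U /\ U x /\
      forall b u, Rabs (b - a) < delta -> U u -> W (vscal VE b u).

Definition vector_topology {E} (VE : vector_space E) (t : topology E) : Prop :=
  add_continuous VE t /\ scal_continuous VE t.

Definition locally_convex {E} (VE : vector_space E) (t : topology E) : Prop :=
  vector_topology VE t /\
  forall W, open t W -> W (vzero VE) ->
    exists N, convex VE N /\ nbhd t N (vzero VE) /\ forall y, N y -> W y.

Definition free_lcs {X E} (tX : topology X) (VE : vector_space E) (t : topology E)
    (i : X -> E) : Prop :=
  locally_convex VE t /\ continuous tX t i /\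
  forall (F : Type) (VF : vector_space F) (tF : topology F),
    locally_convex VF tF ->
    forall f : X -> F, continuous tX tF f ->
      exists g : E -> F,
        (linear VE VF g /\ continuous t tF g /\ forall x, g (i x) = f x) /\
        (forall h : E -> F, linear VE VF h -> continuous t tF h ->
           (forall x, h (i x) = f x) -> forall v, h v = g v).

Definition lc_compatible {E} (VE : vector_space E) (tau nu : topology E) : Prop :=
  forall f : E -> R, linear_functional VE f ->
    (continuous tau R_topology f <-> continuous nu R_topology f).

Definition mackey_space {E} (VE : vector_space E) (tau : topology E) : Prop :=
  forall nu : topology E, locally_convex VE nu -> lc_compatible VE tau nu ->
    coarser nu tau.

(* The circle group S is represented as the unit circle in R x R = C. *)
Definition cmul (z w : R * R) : R * R :=
  (fst z * fst w - snd z * snd w, fst z * snd w + snd z * fst w).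

Definition cdist (z w : R * R) : R :=
  sqrt ((fst z - fst w) ^ 2 + (snd z - snd w) ^ 2).

Definition group_topology {E} (VE : vector_space E) (t : topology E) : Prop :=
  add_continuous VE t /\ continuous t t (vopp VE).

Definition character {E} (VE : vector_space E) (t : topology E) (chi : E -> R * R) : Prop :=
  (forall x, fst (chi x) ^ 2 + snd (chi x) ^ 2 = 1) /\
  (forall x y, chi (vadd VE x y) = cmul (chi x) (chi y)) /\
  (forall x eps, eps > 0 -> exists U, open t U /\ U x /\
      forall y, U y -> cdist (chi y) (chi x) < eps).

(* S_+ = {z in S : Re z >= 0} *)
Definition quasi_convex {E} (VE : vector_space E) (t : topology E) (A : E -> Prop) : Prop :=
  forall g, ~ A g -> exists chi, character VE t chi /\
    (forall a, A a -> 0 <= fst (chi a)) /\ ~ (0 <= fst (chi g)).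

Definition locally_quasi_convex {E} (VE : vector_space E) (t : topology E) : Prop :=
  forall W, open t W -> W (vzero VE) ->
    exists N, quasi_convex VE t N /\ nbhd t N (vzero VE) /\ forall y, N y -> W y.

Definition group_compatible {E} (VE : vector_space E) (mu nu : topology E) : Prop :=
  forall chi, character VE mu chi <-> character VE nu chi.

Definition mackey_group {E} (VE : vector_space E) (mu : topology E) : Prop :=
  forall nu : topology E, group_topology VE nu -> locally_quasi_convex VE nu ->
    group_compatible VE mu nu -> coarser nu mu.

(* Main.v *)
Require Import Defs.
From Stdlib Require Import Reals.
From Stdlib Require Import Reals Lra Lia ZArith List Classical ClassicalEpsilon FunctionalExtensionality PropExtensionality ProofIrrelevance.
Open Scope R_scope.


Lemma open_ext {T} (t : topology T) (P Q : T -> Prop) :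
  (forall x, P x <-> Q x) -> open t P -> open t Q.
Proof.
  intros H HP. assert (E : P = Q).
  { apply functional_extensionality; intro x; apply propositional_extensionality; apply H. }
  rewrite <- E; exact HP.
Qed.

Lemma open_local {T} (t : topology T) (P : T -> Prop) :
  (forall x, P x -> exists U, open t U /\ U x /\ forall y, U y -> P y) -> open t P.
Proof.
  intros H.
  apply (open_ext t (fun x => exists j : { U : T -> Prop | open t U /\ forall y, U y -> P y }, proj1_sig j x)).
  - intro x; split.
    + intros [j Ux]. destruct j as [U [HU HUP]]. simpl in Ux. auto.
    + intro Px. destruct (H x Px) as [U [HU [Ux HUP]]].
      exists (exist _ U (conj HU HUP)). exact Ux.
  - apply open_union. intros [U [HU HUP]]. exact HU.
Qed.

Lemma open_empty {T} (t : topology T) : open t (fun _ => False).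
Proof.
  apply (open_ext t (fun x => exists j : False, (fun (_:False) (_:T) => True) j x)).
  - intro x; split; [intros [[] _] | tauto].
  - apply open_union. intros [].
Qed.

Lemma open_full' {T} (t : topology T) (P : T -> Prop) : (forall x, P x) -> open t P.
Proof. intro H. apply (open_ext t (fun _ => True)); [intro x; split; auto | apply open_full]. Qed.

Definition indisc (T : Type) : topology T.
Proof.
  refine {| open := fun U : T -> Prop => (forall x, U x) \/ (forall x, ~ U x) |}.
  - left; auto.
  - intros U V [HU|HU] [HV|HV].
    + left; auto.
    + right; intros x [_ Hx]; exact (HV x Hx).
    + right; intros x [Hx _]; exact (HU x Hx).
    + right; intros x [Hx _]; exact (HU x Hx).
  - intros I F HF. destruct (classic (exists j x, F j x)) as [[j [x Hx]]|Hn].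
    + left. intro y. exists j. destruct (HF j) as [Hf|He]; [apply Hf | exfalso; exact (He x Hx)].
    + right. intros x [j Hj]. apply Hn; eauto.
Defined.

Lemma cont_indisc {A B} (ta : topology A) (f : A -> B) : continuous ta (indisc B) f.
Proof.
  intros V [HV|HV].
  - apply open_full'. intro; apply HV.
  - apply (open_ext ta (fun _ => False)); [intro x; split; [tauto | apply HV] | apply open_empty].
Qed.

Lemma lc_indisc {E} (VE : vector_space E) : locally_convex VE (indisc E).
Proof.
  split; [split|].
  - intros x y W [HW|HW] Wxy; [|exfalso; exact (HW _ Wxy)].
    exists (fun _ => True), (fun _ => True). repeat split; try (left; auto). intros; apply HW.
  - intros a x W [HW|HW] Wx; [|exfalso; exact (HW _ Wx)].
    exists 1, (fun _ => True). repeat split; try lra; try (left; auto). intros; apply HW.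
  - intros W [HW|HW] W0; [|exfalso; exact (HW _ W0)].
    exists (fun _ => True). split; [|split].
    + intros x y t _ _ _; auto.
    + exists (fun _ => True). split; [left; auto| split; auto].
    + intros; apply HW.
Qed.

Definition VR : vector_space R.
Proof.
  refine {| vzero := 0; vadd := Rplus; vopp := Ropp; vscal := Rmult |}; intros; ring.
Defined.

Lemma ball_open (c e : R) : R_open (fun y => Rabs (y - c) < e).
Proof.
  intros x Hx. exists (e - Rabs (x - c)). split; [lra|].
  intros y Hy. pose proof (Rabs_triang (y - x) (x - c)).
  replace (y - c) with ((y - x) + (x - c)) by ring. lra.
Qed.

Lemma Rabs_scal_diff (a b u x : R) :
  Rabs (b * u - a * x) <= Rabs b * Rabs (u - x) + Rabs (b - a) * Rabs x.
Proof.
  replace (b * u - a * x) with (b * (u - x) + (b - a) * x) by ring.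
  rewrite <- !Rabs_mult. apply Rabs_triang.
Qed.

Lemma scal_estimate (a b M r eps : R) :
  eps > 0 -> 0 <= M -> 0 <= r ->
  Rabs (b - a) < Rmin 1 (eps / (2 * (M + 1))) ->
  r < eps / (2 * (Rabs a + 1)) ->
  Rabs b * r + Rabs (b - a) * M < eps.
Proof.
  intros He HM Hr Hb Hr2.
  pose proof (Rmin_l 1 (eps / (2 * (M + 1)))) as H1.
  pose proof (Rmin_r 1 (eps / (2 * (M + 1)))) as H2.
  assert (Hbb : Rabs b <= Rabs a + 1).
  { pose proof (Rabs_triang (b - a) a). replace (b - a + a) with b in H by ring. lra. }
  assert (HA : 0 <= Rabs a) by apply Rabs_pos.
  assert (HB : 0 <= Rabs (b - a)) by apply Rabs_pos.
  assert (E1 : Rabs b * r <= (Rabs a + 1) * r) by (apply Rmult_le_compat_r; lra).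
  assert (E2 : (Rabs a + 1) * r < eps / 2).
  { replace (eps / 2) with ((Rabs a + 1) * (eps / (2 * (Rabs a + 1)))) by (field; lra).
    apply Rmult_lt_compat_l; lra. }
  assert (E3 : Rabs (b - a) * M <= eps / (2 * (M + 1)) * M) by (apply Rmult_le_compat_r; lra).
  assert (E4 : eps / (2 * (M + 1)) * M < eps / 2).
  { unfold Rdiv. replace (eps * / (2 * (M + 1)) * M) with ((eps / 2) * (M / (M + 1))) by (field; lra).
    assert (M / (M + 1) < 1). { apply (Rmult_lt_reg_r (M + 1)); [lra|]. field_simplify; lra. }
    assert (0 < eps / 2) by lra.
    replace (eps * / 2) with (eps / 2 * 1) by field. apply Rmult_lt_compat_l; lra. }
  lra.
Qed.

Lemma lc_R : locally_convex VR R_topology.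
Proof.
  split; [split|].
  - intros x y W HW Wxy. destruct (HW _ Wxy) as [e [He HeW]].
    exists (fun u => Rabs (u - x) < e / 2), (fun v => Rabs (v - y) < e / 2).
    repeat split; try apply ball_open; try (rewrite Rminus_diag, Rabs_R0; lra).
    intros u v Hu Hv. apply HeW. simpl.
    replace (u + v - (x + y)) with ((u - x) + (v - y)) by ring.
    pose proof (Rabs_triang (u - x) (v - y)). lra.
  - intros a x W HW Wax. destruct (HW _ Wax) as [e [He HeW]].
    exists (Rmin 1 (e / (2 * (Rabs x + 1)))), (fun u => Rabs (u - x) < e / (2 * (Rabs a + 1))).
    assert (0 < e / (2 * (Rabs x + 1))) by (pose proof (Rabs_pos x); apply Rdiv_lt_0_compat; lra).
    assert (0 < e / (2 * (Rabs a + 1))) by (pose proof (Rabs_pos a); apply Rdiv_lt_0_compat; lra).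
    repeat split.
    + apply Rmin_glb_lt; lra.
    + apply ball_open.
    + rewrite Rminus_diag, Rabs_R0; lra.
    + intros b u Hb Hu. apply HeW. simpl.
      pose proof (Rabs_scal_diff a b u x).
      pose proof (scal_estimate a b (Rabs x) (Rabs (u - x)) e He (Rabs_pos _) (Rabs_pos _) Hb Hu).
      lra.
  - intros W HW W0. destruct (HW _ W0) as [e [He HeW]].
    exists (fun y => Rabs (y - 0) < e). repeat split.
    + intros x y t Hx Hy Ht. simpl. rewrite Rminus_0_r in *.
      pose proof (Rabs_triang (t * x) ((1 - t) * y)).
      rewrite !Rabs_mult in H. rewrite (Rabs_pos_eq t) in H by lra.
      rewrite (Rabs_pos_eq (1 - t)) in H by lra.
      assert (t * Rabs x <= t * e) by (apply Rmult_le_compat_l; lra).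
      assert ((1 - t) * Rabs y <= (1 - t) * e) by (apply Rmult_le_compat_l; lra).
      destruct (Req_dec t 0) as [->|Ht0].
      * rewrite Rmult_0_l, Rplus_0_l, Rminus_0_r, Rmult_1_l. exact Hy.
      * assert (t * Rabs x < t * e) by (apply Rmult_lt_compat_l; lra). lra.
    + exists (fun y => Rabs (y - 0) < e). repeat split; [apply ball_open | | auto].
      rewrite Rminus_diag, Rabs_R0; lra.
    + intros y Hy. apply HeW. exact Hy.
Qed.


Section VA.
Context {E : Type} (VE : vector_space E).

Lemma vadd_cancel x y z : vadd VE x y = vadd VE x z -> y = z.
Proof.
  intro H. assert (H2 : vadd VE (vopp VE x) (vadd VE x y) = vadd VE (vopp VE x) (vadd VE x z)) by (rewrite H; auto).
  rewrite !(vadd_assoc _ VE) in H2. rewrite (vadd_comm _ VE (vopp VE x) x), (vadd_opp _ VE) in H2.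
  rewrite !(vadd_comm _ VE (vzero VE)), !(vadd_0 _ VE) in H2. exact H2.
Qed.

Lemma vscal_zero_v a : vscal VE a (vzero VE) = vzero VE.
Proof.
  apply (vadd_cancel (vscal VE a (vzero VE))).
  rewrite <- (vscal_distr_v _ VE), (vadd_0 _ VE), (vadd_0 _ VE). reflexivity.
Qed.

Lemma vscal_zero_s x : vscal VE 0 x = vzero VE.
Proof.
  apply (vadd_cancel (vscal VE 0 x)).
  rewrite <- (vscal_distr_s _ VE), (vadd_0 _ VE), Rplus_0_l. reflexivity.
Qed.

Lemma lf_zero f : linear_functional VE f -> f (vzero VE) = 0.
Proof.
  intros [Ha _]. pose proof (Ha (vzero VE) (vzero VE)) as H. rewrite (vadd_0 _ VE) in H. lra.
Qed.

Lemma lf_opp f x : linear_functional VE f -> f (vopp VE x) = - f x.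
Proof.
  intros Hf. pose proof (lf_zero f Hf). destruct Hf as [Ha _].
  pose proof (Ha x (vopp VE x)) as H1. rewrite (vadd_opp _ VE) in H1. lra.
Qed.

Lemma lf_sub f x y : linear_functional VE f -> f (vadd VE x (vopp VE y)) = f x - f y.
Proof. intros Hf. rewrite (proj1 Hf), (lf_opp f y Hf). ring. Qed.

Lemma affine_open (t : topology E) : vector_topology VE t ->
  forall W k x0, open t W -> open t (fun y => W (vscal VE k (vadd VE y x0))).
Proof.
  intros [Had Hsc] W k x0 HW. apply open_local. intros y Hy.
  destruct (Hsc k (vadd VE y x0) W HW Hy) as [d [U1 [Hd [HU1 [U1y HU1W]]]]].
  destruct (Had y x0 U1 HU1 U1y) as [U2 [V [HU2 [U2y [HV [Vx0 HUV]]]]]].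
  exists U2. split; [exact HU2|split; [exact U2y|]].
  intros z Hz. apply HU1W; [rewrite Rminus_diag, Rabs_R0; lra|]. apply HUV; auto.
Qed.

Lemma transl_open (t : topology E) : vector_topology VE t ->
  forall W x0, open t W -> open t (fun y => W (vadd VE y x0)).
Proof.
  intros Hv W x0 HW. apply (open_ext t (fun y => W (vscal VE 1 (vadd VE y x0)))).
  - intro y. rewrite (vscal_1 _ VE). tauto.
  - apply affine_open; auto.
Qed.

End VA.

Definition ee (x : R) : R * R := (cos (2 * PI * x), sin (2 * PI * x)).

Lemma ee_unit x : fst (ee x) ^ 2 + snd (ee x) ^ 2 = 1.
Proof. simpl. pose proof (sin2_cos2 (2 * PI * x)). unfold Rsqr in H. lra. Qed.

Lemma ee_add x y : ee (x + y) = cmul (ee x) (ee y).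
Proof.
  unfold ee, cmul; simpl. replace (2 * PI * (x + y)) with (2 * PI * x + 2 * PI * y) by ring.
  rewrite cos_plus, sin_plus. f_equal; ring.
Qed.

Lemma ee_0 : ee 0 = (1, 0).
Proof. unfold ee. rewrite Rmult_0_r, cos_0, sin_0. reflexivity. Qed.

Lemma ee_half : ee (/2) = (-1, 0).
Proof. unfold ee. replace (2 * PI * / 2) with PI by field. rewrite cos_PI, sin_PI. reflexivity. Qed.

Lemma Rabs_sin_le u : Rabs (sin u) <= Rabs u.
Proof.
  destruct (Rtotal_order u 0) as [H|[H|H]].
  - pose proof (sin_lt_x (- u)). rewrite sin_neg in H0.
    rewrite (Rabs_left u) by lra.
    destruct (Rle_lt_dec 0 (sin u)).
    + rewrite Rabs_pos_eq by lra. pose proof (SIN_bound u).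
      destruct (Rle_lt_dec u (-1)); [lra|].
      assert (sin u < 0) by (apply sin_lt_0_var; pose proof PI2_1; lra). lra.
    + rewrite Rabs_left by lra. lra.
  - subst. rewrite sin_0, Rabs_R0. lra.
  - pose proof (sin_lt_x u H). rewrite (Rabs_pos_eq u) by lra.
    destruct (Rle_lt_dec 0 (sin u)).
    + rewrite Rabs_pos_eq by lra. lra.
    + rewrite Rabs_left by lra. pose proof (SIN_bound u).
      destruct (Rle_lt_dec 1 u); [lra|].
      assert (0 <= sin u) by (apply sin_ge_0; pose proof PI2_1; lra). lra.
Qed.

Lemma cdist_ee x y : cdist (ee y) (ee x) <= 2 * PI * Rabs (y - x).
Proof.
  unfold cdist, ee; cbn [fst snd].
  set (a := 2 * PI * y). set (b := 2 * PI * x).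
  assert (E : (cos a - cos b) ^ 2 + (sin a - sin b) ^ 2 = (2 * sin ((a - b) / 2)) ^ 2).
  { pose proof (sin2_cos2 a). pose proof (sin2_cos2 b). pose proof (cos_minus a b).
    pose proof (cos_2a_sin ((a - b) / 2)). replace (2 * ((a - b) / 2)) with (a - b) in H2 by field.
    unfold Rsqr in *. nra. }
  rewrite E.
  assert (H0 : 0 <= 2 * PI * Rabs (y - x)) by (pose proof PI_RGT_0; pose proof (Rabs_pos (y - x)); nra).
  rewrite <- (sqrt_Rsqr (2 * PI * Rabs (y - x))) by exact H0.
  apply sqrt_le_1_alt. unfold Rsqr.
  pose proof (Rabs_sin_le ((a - b) / 2)).
  assert (Hab : Rabs ((a - b) / 2) = PI * Rabs (y - x)).
  { unfold a, b. replace ((2 * PI * y - 2 * PI * x) / 2) with (PI * (y - x)) by field.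
    rewrite Rabs_mult, Rabs_pos_eq; [reflexivity| pose proof PI_RGT_0; lra]. }
  rewrite Hab in H. pose proof (Rabs_pos (sin ((a - b) / 2))).
  replace ((2 * sin ((a - b) / 2)) ^ 2) with (4 * (Rabs (sin ((a - b) / 2)) * Rabs (sin ((a - b) / 2)))).
  - nra.
  - rewrite <- Rabs_mult. rewrite Rabs_pos_eq by nra. ring.
Qed.

Lemma ee_cont x eps : eps > 0 -> exists d, d > 0 /\ forall y, Rabs (y - x) < d -> cdist (ee y) (ee x) < eps.
Proof.
  intros He. pose proof PI_RGT_0. exists (eps / (2 * PI + 1)). split.
  - apply Rdiv_lt_0_compat; lra.
  - intros y Hy. pose proof (cdist_ee x y).
    assert (2 * PI * Rabs (y - x) < eps).
    { apply (Rle_lt_trans _ ((2 * PI + 1) * Rabs (y - x))).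
      - pose proof (Rabs_pos (y - x)); nra.
      - replace eps with ((2 * PI + 1) * (eps / (2 * PI + 1))) by (field; lra).
        apply Rmult_lt_compat_l; lra. }
    lra.
Qed.

Lemma ee_inj a b : ee a = ee b -> Rabs (a - b) < 1 -> a = b.
Proof.
  intros H Hab. unfold ee in H. injection H as H1 H2.
  assert (Hc : cos (2 * PI * (a - b)) = 1).
  { replace (2 * PI * (a - b)) with (2 * PI * a - 2 * PI * b) by ring.
    rewrite cos_minus, H1, H2. pose proof (sin2_cos2 (2 * PI * b)). unfold Rsqr in H. lra. }
  replace (2 * PI * (a - b)) with (2 * (PI * (a - b))) in Hc by ring.
  rewrite cos_2a_sin in Hc.
  assert (Hs : sin (PI * (a - b)) = 0) by nra.
  destruct (sin_eq_0_0 _ Hs) as [k Hk].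
  assert (Hk2 : a - b = IZR k).
  { apply (Rmult_eq_reg_l PI); [| pose proof PI_RGT_0; lra]. rewrite Hk; ring. }
  rewrite Hk2 in Hab. assert (k = 0%Z).
  { apply Rabs_def2 in Hab. destruct Hab as [Hl Hr].
    assert (-1 < k)%Z by (apply lt_IZR; simpl; lra).
    assert (k < 1)%Z by (apply lt_IZR; simpl; lra). lia. }
  subst k. simpl in Hk2. lra.
Qed.

Lemma ee_uniq c c' : (forall s, ee (c * s) = ee (c' * s)) -> c = c'.
Proof.
  intros H. destruct (Req_dec c c') as [|Hn]; [auto|exfalso].
  set (s := / (2 * (c - c'))).
  assert (Hcs : c * s - c' * s = / 2) by (unfold s; field; lra).
  pose proof (ee_inj _ _ (H s)). rewrite Hcs in H0.
  assert (Rabs (/2) < 1) by (rewrite Rabs_pos_eq; lra). specialize (H0 H1). lra.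
Qed.

Lemma cmul_unit_idem z : fst z ^ 2 + snd z ^ 2 = 1 -> cmul z z = z -> z = (1, 0).
Proof.
  destruct z as [x y]; unfold cmul; simpl. intros Hu Hc. injection Hc as H1 H2.
  assert (y = 0) by nra. subst. assert (x = 1) by nra. subst. reflexivity.
Qed.


Lemma floor_nat x : 0 <= x -> exists k : nat, INR k <= x < INR k + 1.
Proof.
  intros Hx. destruct (archimed x) as [H1 H2].
  assert (Hz : (0 < up x)%Z) by (apply lt_IZR; simpl; lra).
  exists (Z.to_nat (up x - 1)).
  rewrite INR_IZR_INZ, Z2Nat.id by lia. rewrite minus_IZR. simpl. lra.
Qed.

Lemma arch_nat x : exists n : nat, x < INR n.
Proof.
  destruct (Rle_lt_dec 0 x) as [H|H].
  - destruct (floor_nat x H) as [k Hk]. exists (S k). rewrite S_INR. lra.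
  - exists 0%nat. simpl. lra.
Qed.

Section Lift1.
Context (g : R -> R * R).
Context (Hu : forall s, fst (g s) ^ 2 + snd (g s) ^ 2 = 1).
Context (Hh : forall s t, g (s + t) = cmul (g s) (g t)).
Context (d : R).
Context (Hd : d > 0).
Context (Hpos : forall s, Rabs s <= d -> fst (g s) > 0).

Definition th s := atan (snd (g s) / fst (g s)) / (2 * PI).

Lemma th_spec s : Rabs s <= d -> g s = ee (th s) /\ Rabs (th s) < / 4.
Proof.
  intros Hs. pose proof (Hpos s Hs) as Hx. pose proof (Hu s) as Hu1.
  destruct (g s) as [x y] eqn:Eg. simpl in Hx, Hu1. unfold th. rewrite Eg. simpl.
  pose proof PI_RGT_0.
  split.
  - unfold ee. replace (2 * PI * (atan (y / x) / (2 * PI))) with (atan (y / x)) by (field; lra).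
    rewrite cos_atan, sin_atan.
    assert (E : sqrt (1 + (y / x)²) = / x).
    { assert (E2 : (/ x)² = 1 + (y / x)²).
      { unfold Rsqr. field_simplify_eq; [|lra]. nra. }
      rewrite <- E2.
      apply sqrt_Rsqr. left. apply Rinv_0_lt_compat; lra. }
    rewrite E. f_equal; field; lra.
  - pose proof (atan_bound (y / x)). apply Rabs_def1.
    + apply (Rmult_lt_reg_r (2 * PI)); [lra|]. unfold Rdiv. rewrite Rmult_assoc, Rinv_l, Rmult_1_r by lra. lra.
    + apply (Rmult_lt_reg_r (2 * PI)); [lra|]. unfold Rdiv. rewrite Rmult_assoc, Rinv_l, Rmult_1_r by lra. lra.
Qed.

Lemma th_add s t : Rabs s <= d -> Rabs t <= d -> Rabs (s + t) <= d -> th (s + t) = th s + th t.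
Proof.
  intros Hs Ht Hst. destruct (th_spec s Hs) as [Es Bs]. destruct (th_spec t Ht) as [Et Bt].
  destruct (th_spec (s + t) Hst) as [Est Bst].
  apply ee_inj.
  - rewrite <- Est, ee_add, <- Es, <- Et. apply Hh.
  - apply Rabs_def1; apply Rabs_def2 in Bs; apply Rabs_def2 in Bt; apply Rabs_def2 in Bst; lra.
Qed.

Definition cc := th d / d.
Definition hh s := th s - cc * s.

Lemma hh_add s t : Rabs s <= d -> Rabs t <= d -> Rabs (s + t) <= d -> hh (s + t) = hh s + hh t.
Proof. intros. unfold hh. rewrite th_add by auto. ring. Qed.

Lemma hh_0 : hh 0 = 0.
Proof.
  assert (H : Rabs 0 <= d) by (rewrite Rabs_R0; lra).
  pose proof (hh_add 0 0 H H). rewrite Rplus_0_l in H0. specialize (H0 H). lra.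
Qed.

Lemma hh_d : hh d = 0.
Proof. unfold hh, cc. field. lra. Qed.

Lemma hh_bound s : Rabs s <= d -> Rabs (hh s) <= / 2.
Proof.
  intros Hs. destruct (th_spec s Hs) as [_ B1].
  assert (Hdd : Rabs d <= d) by (rewrite Rabs_pos_eq; lra).
  destruct (th_spec d Hdd) as [_ B2].
  unfold hh. pose proof (Rabs_triang (th s) (- (cc * s))). rewrite Rabs_Ropp in H.
  assert (Rabs (cc * s) <= Rabs (th d)).
  { unfold cc. rewrite Rabs_mult. unfold Rdiv. rewrite Rabs_mult, (Rabs_inv d), (Rabs_pos_eq d) by lra.
    apply (Rle_trans _ (Rabs (th d) * / d * d)); [|right; field; lra].
    apply Rmult_le_compat_l; [|exact Hs]. apply Rmult_le_pos; [apply Rabs_pos| left; apply Rinv_0_lt_compat; lra]. }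
  unfold Rminus. lra.
Qed.

Lemma hh_nat n s : INR n * Rabs s <= d -> Rabs s <= d -> hh (INR n * s) = INR n * hh s.
Proof.
  induction n; intros Hn Hs.
  - simpl. rewrite !Rmult_0_l. apply hh_0.
  - rewrite S_INR in *. assert (Hn' : INR n * Rabs s <= d) by (pose proof (Rabs_pos s); lra).
    replace ((INR n + 1) * s) with (INR n * s + s) by ring.
    rewrite hh_add; [rewrite IHn by auto; ring | | auto |].
    + rewrite Rabs_mult, Rabs_pos_eq by apply pos_INR. exact Hn'.
    + replace (INR n * s + s) with ((INR n + 1) * s) by ring.
      rewrite Rabs_mult, Rabs_pos_eq by (pose proof (pos_INR n); lra). exact Hn.
Qed.

Lemma hh_grid m k : (1 <= m)%nat -> (k <= m)%nat -> hh (INR k * (d / INR m)) = 0.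
Proof.
  intros Hm Hk. assert (Hm' : 1 <= INR m) by (apply (le_INR 1); exact Hm).
  assert (Hk' : INR k <= INR m) by (apply le_INR; exact Hk).
  assert (Hq : Rabs (d / INR m) = d / INR m) by (apply Rabs_pos_eq; unfold Rdiv; apply Rmult_le_pos; [lra| left; apply Rinv_0_lt_compat; lra]).
  assert (Hqd : d / INR m <= d).
  { unfold Rdiv. replace d with (d * 1) at 2 by ring. apply Rmult_le_compat_l; [lra|].
    rewrite <- Rinv_1. apply Rinv_le_contravar; lra. }
  assert (H1 : hh (d / INR m) = 0).
  { pose proof (hh_nat m (d / INR m)) as H. rewrite Hq in H.
    replace (INR m * (d / INR m)) with d in H by (field; lra).
    rewrite hh_d in H. specialize (H (Req_le _ _ eq_refl) Hqd).
    apply (Rmult_eq_reg_l (INR m)); lra. }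
  rewrite hh_nat; [rewrite H1; ring | | rewrite Hq; exact Hqd].
  rewrite Hq. replace d with (INR m * (d / INR m)) at 2 by (field; lra).
  apply Rmult_le_compat_r; [rewrite <- Hq; apply Rabs_pos | exact Hk'].
Qed.

Lemma hh_small t m : 0 <= t <= d -> (1 <= m)%nat -> Rabs (hh t) <= / 2 / INR m.
Proof.
  intros Ht Hm. assert (Hm' : 1 <= INR m) by (apply (le_INR 1); exact Hm).
  assert (Hx : 0 <= t * INR m / d) by (unfold Rdiv; apply Rmult_le_pos; [nra| left; apply Rinv_0_lt_compat; lra]).
  destruct (floor_nat _ Hx) as [k [Hk1 Hk2]].
  set (q := INR k * (d / INR m)). set (r := t - q).
  assert (Hq0 : 0 <= q) by (unfold q, Rdiv; apply Rmult_le_pos; [apply pos_INR| apply Rmult_le_pos; [lra| left; apply Rinv_0_lt_compat; lra]]).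
  assert (Hqt : q <= t).
  { unfold q. replace t with (t * INR m / d * (d / INR m)) by (field; lra).
    apply Rmult_le_compat_r; [unfold Rdiv; apply Rmult_le_pos; [lra| left; apply Rinv_0_lt_compat; lra] | exact Hk1]. }
  assert (Hr : r < d / INR m).
  { unfold r, q. apply (Rmult_lt_reg_r (INR m / d)); [apply Rdiv_lt_0_compat; lra|].
    replace ((t - INR k * (d / INR m)) * (INR m / d)) with (t * INR m / d - INR k) by (field; lra).
    replace (d / INR m * (INR m / d)) with 1 by (field; lra). lra. }
  assert (Hkm : (k <= m)%nat).
  { apply INR_le. assert (t * INR m / d <= INR m).
    { unfold Rdiv. replace (INR m) with (d * INR m * / d) at 2 by (field; lra).
      apply Rmult_le_compat_r; [left; apply Rinv_0_lt_compat; lra|]. apply Rmult_le_compat_r; lra. }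
    lra. }
  assert (Hqd : q <= d) by lra.
  assert (Hr0 : 0 <= r) by (unfold r; lra).
  assert (Hmr : INR m * r <= d).
  { replace d with (INR m * (d / INR m)) by (field; lra). apply Rmult_le_compat_l; lra. }
  assert (Hrd : r <= d) by (unfold r; lra).
  assert (E : hh t = hh r).
  { replace t with (q + r) by (unfold r; ring).
    rewrite hh_add.
    - unfold q. rewrite hh_grid by auto. ring.
    - rewrite Rabs_pos_eq; lra.
    - rewrite Rabs_pos_eq; lra.
    - unfold r; rewrite Rabs_pos_eq; lra. }
  rewrite E.
  pose proof (hh_nat m r) as H. rewrite (Rabs_pos_eq r) in H by lra. specialize (H Hmr Hrd).
  assert (Hb : Rabs (hh (INR m * r)) <= / 2).
  { apply hh_bound. rewrite Rabs_mult, (Rabs_pos_eq (INR m)), (Rabs_pos_eq r); lra. }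
  rewrite H, Rabs_mult, (Rabs_pos_eq (INR m)) in Hb by lra.
  apply (Rmult_le_reg_l (INR m)); [lra|]. replace (INR m * (/ 2 / INR m)) with (/2) by (field; lra). exact Hb.
Qed.

Lemma hh_zero_pos t : 0 <= t <= d -> hh t = 0.
Proof.
  intros Ht. destruct (Req_dec (hh t) 0) as [|Hn]; [auto|exfalso].
  assert (Ha : 0 < Rabs (hh t)) by (apply Rabs_pos_lt; exact Hn).
  destruct (arch_nat (/ 2 / Rabs (hh t))) as [m Hm].
  assert (Hm1 : (1 <= m)%nat).
  { destruct m; [|lia]. simpl in Hm. assert (0 < / 2 / Rabs (hh t)) by (apply Rdiv_lt_0_compat; lra). lra. }
  pose proof (hh_small t m Ht Hm1). assert (Hm' : 1 <= INR m) by (apply (le_INR 1); exact Hm1).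
  apply (Rmult_le_compat_r (INR m)) in H; [|lra].
  replace (/ 2 / INR m * INR m) with (/2) in H by (field; lra).
  apply (Rmult_lt_compat_r (Rabs (hh t))) in Hm; [|exact Ha].
  replace (/ 2 / Rabs (hh t) * Rabs (hh t)) with (/2) in Hm by (field; lra). nra.
Qed.

Lemma hh_zero t : Rabs t <= d -> hh t = 0.
Proof.
  intros Ht. destruct (Rle_lt_dec 0 t).
  - apply hh_zero_pos. rewrite Rabs_pos_eq in Ht; lra.
  - rewrite Rabs_left in Ht by lra.
    pose proof (hh_zero_pos (- t)). assert (hh (- t) = 0) by (apply H; lra).
    assert (E : hh (t + - t) = hh t + hh (- t)).
    { apply hh_add; [rewrite Rabs_left; lra | rewrite Rabs_pos_eq; lra | rewrite Rplus_opp_r, Rabs_R0; lra]. }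
    rewrite Rplus_opp_r, hh_0 in E. lra.
Qed.

Lemma g_small s : Rabs s <= d -> g s = ee (cc * s).
Proof.
  intros Hs. destruct (th_spec s Hs) as [E _]. rewrite E. f_equal.
  pose proof (hh_zero s Hs). unfold hh in H. lra.
Qed.

Lemma g_all : forall s, g s = ee (cc * s).
Proof.
  assert (Hn : forall n : nat, forall s, Rabs s <= INR n * d -> g s = ee (cc * s)).
  { induction n; intros s Hs.
    - simpl in Hs. apply g_small. lra.
    - destruct (Rle_lt_dec (Rabs s) d) as [H|H]; [apply g_small; exact H|].
      rewrite S_INR in Hs.
      destruct (Rle_lt_dec 0 s) as [H0|H0].
      + rewrite Rabs_pos_eq in H, Hs by lra.
        replace s with ((s - d) + d) by ring. rewrite Hh, IHn, g_small.
        * rewrite <- ee_add. f_equal; ring.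
        * rewrite Rabs_pos_eq; lra.
        * rewrite Rabs_pos_eq; lra.
      + rewrite Rabs_left in H, Hs by lra.
        replace s with ((s + d) + - d) by ring. rewrite Hh, IHn, g_small.
        * rewrite <- ee_add. f_equal; ring.
        * rewrite Rabs_Ropp, Rabs_pos_eq; lra.
        * rewrite Rabs_left; lra. }
  intro s. destruct (arch_nat (Rabs s / d)) as [n Hn1]. apply (Hn n).
  apply (Rmult_lt_compat_r d) in Hn1; [|lra]. replace (Rabs s / d * d) with (Rabs s) in Hn1 by (field; lra). lra.
Qed.

End Lift1.

Lemma lift1 (g : R -> R * R) : (forall s, fst (g s) ^ 2 + snd (g s) ^ 2 = 1) ->
  (forall s t, g (s + t) = cmul (g s) (g t)) -> forall d, d > 0 ->
  (forall s, Rabs s <= d -> fst (g s) > 0) -> exists c, forall s, g s = ee (c * s).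
Proof. intros Hu Hh d Hd Hp. exists (cc g d). apply g_all; auto. Qed.


Lemma cdist_pos z : cdist z (1, 0) < 1 -> fst z > 0.
Proof.
  destruct z as [x y]. unfold cdist; cbn [fst snd]. intros H.
  destruct (Rlt_le_dec 0 x) as [|Hx]; [auto|exfalso].
  assert (1 <= (x - 1) ^ 2 + (y - 0) ^ 2) by nra.
  apply sqrt_le_1_alt in H0. rewrite sqrt_1 in H0. lra.
Qed.

Section Chars.
Context {E : Type} (VE : vector_space E) (t : topology E).

Lemma char_of_lf (phi : E -> R) (a : R) :
  linear_functional VE phi -> continuous t R_topology phi ->
  character VE t (fun v => ee (a * phi v)).
Proof.
  intros Hl Hc. split; [|split].
  - intro; apply ee_unit.
  - intros x y. rewrite (proj1 Hl), Rmult_plus_distr_l. apply ee_add.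
  - intros x eps He. destruct (ee_cont (a * phi x) eps He) as [d [Hd Hde]].
    exists (fun y => Rabs (phi y - phi x) < d / (Rabs a + 1)). split; [|split].
    + apply (Hc (fun r => Rabs (r - phi x) < d / (Rabs a + 1))). apply ball_open.
    + rewrite Rminus_diag, Rabs_R0. apply Rdiv_lt_0_compat; [lra| pose proof (Rabs_pos a); lra].
    + intros y Hy. apply Hde. rewrite <- Rmult_minus_distr_l, Rabs_mult.
      pose proof (Rabs_pos a). pose proof (Rabs_pos (phi y - phi x)).
      apply (Rle_lt_trans _ ((Rabs a + 1) * Rabs (phi y - phi x))); [nra|].
      replace d with ((Rabs a + 1) * (d / (Rabs a + 1))) by (field; lra).
      apply Rmult_lt_compat_l; lra.
Qed.

Lemma char_lift : vector_topology VE t -> forall chi, character VE t chi ->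
  exists phi, linear_functional VE phi /\ continuous t R_topology phi /\ forall v, chi v = ee (phi v).
Proof.
  intros Hv chi [Hu [Hh Hc]].
  assert (Hv' := Hv). destruct Hv' as [Had Hsc].
  assert (H0 : chi (vzero VE) = (1, 0)).
  { apply cmul_unit_idem; [apply Hu|]. rewrite <- Hh, (vadd_0 _ VE). reflexivity. }
  destruct (Hc (vzero VE) 1 ltac:(lra)) as [U0 [HU0 [U00 HU0c]]].
  assert (Hp : forall y, U0 y -> fst (chi y) > 0).
  { intros y Hy. apply cdist_pos. rewrite <- H0. apply HU0c; auto. }
  assert (Hline : forall v, exists c, forall s, chi (vscal VE s v) = ee (c * s)).
  { intro v.
    assert (W0 : U0 (vscal VE 0 v)) by (rewrite vscal_zero_s; exact U00).
    destruct (Hsc 0 v U0 HU0 W0) as [d [U [Hd [HU [Uv HUW]]]]].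
    apply (lift1 (fun s => chi (vscal VE s v))) with (d := d / 2).
    - intro; apply Hu.
    - intros s s'. rewrite (vscal_distr_s _ VE). apply Hh.
    - lra.
    - intros s Hs. apply Hp. apply HUW; [rewrite Rminus_0_r; lra | exact Uv]. }
  set (phi := fun v => proj1_sig (constructive_indefinite_description _ (Hline v))).
  assert (Hphi : forall v s, chi (vscal VE s v) = ee (phi v * s)).
  { intros v s. unfold phi. destruct (constructive_indefinite_description _ (Hline v)) as [c Hcv]. simpl. apply Hcv. }
  assert (Hlin : linear_functional VE phi).
  { split.
    - intros x y. apply ee_uniq. intro s.
      rewrite <- Hphi, (vscal_distr_v _ VE), Hh, !Hphi, <- ee_add. f_equal; ring.
    - intros a x. apply ee_uniq. intro s.
      rewrite <- Hphi, (vscal_assoc _ VE), Hphi. f_equal; ring. }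
  exists phi. split; [exact Hlin| split].
  2: { intro v. rewrite <- (vscal_1 _ VE v) at 1. rewrite Hphi. f_equal; ring. }
  assert (W0 : U0 (vscal VE 0 (vzero VE))) by (rewrite vscal_zero_s; exact U00).
  destruct (Hsc 0 (vzero VE) U0 HU0 W0) as [d0 [U1 [Hd0 [HU1 [U10 HU1W]]]]].
  assert (Hbd : forall u, U1 u -> Rabs (phi u) <= / d0).
  { intros u Hu1. destruct (Rle_lt_dec (Rabs (phi u)) (/ d0)) as [|Hgt]; [auto|exfalso].
    assert (Hpu : phi u <> 0).
    { intro Hz. rewrite Hz, Rabs_R0 in Hgt. pose proof (Rinv_0_lt_compat d0 Hd0). lra. }
    set (b := / (2 * phi u)).
    assert (Hb : Rabs (b - 0) < d0).
    { unfold b. rewrite Rminus_0_r, Rabs_inv, Rabs_mult, (Rabs_pos_eq 2) by lra.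
      pose proof (Rabs_pos_lt _ Hpu).
      apply (Rmult_lt_reg_l (2 * Rabs (phi u))); [lra|]. rewrite Rinv_r by lra.
      apply (Rmult_lt_compat_r d0) in Hgt; [|lra]. rewrite Rinv_l in Hgt by lra. nra. }
    pose proof (Hp _ (HU1W b u Hb Hu1)). rewrite Hphi in H.
    replace (phi u * b) with (/ 2) in H by (unfold b; field; auto).
    rewrite ee_half in H. simpl in H. lra. }
  intros V HV. apply open_local. intros x Vx. destruct (HV _ Vx) as [eps [He HeV]].
  set (k := 2 / (d0 * eps)).
  assert (Hk : k > 0) by (unfold k; apply Rdiv_lt_0_compat; [lra| nra]).
  exists (fun y => U1 (vscal VE k (vadd VE y (vopp VE x)))). split; [|split].
  - apply affine_open; auto.
  - rewrite (vadd_opp _ VE), vscal_zero_v. exact U10.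
  - intros y Hy. apply HeV. pose proof (Hbd _ Hy) as Hb.
    rewrite (proj2 Hlin), lf_sub in Hb by exact Hlin. rewrite Rabs_mult, (Rabs_pos_eq k) in Hb by lra.
    assert (Rabs (phi y - phi x) <= / d0 / k).
    { apply (Rmult_le_reg_l k); [lra|]. replace (k * (/ d0 / k)) with (/ d0) by (field; lra). exact Hb. }
    replace (/ d0 / k) with (eps / 2) in H by (unfold k; field; lra). lra.
Qed.

Lemma qc_ball (Kp : (E -> R) -> Prop) (eps : R) :
  eps > 0 -> (forall psi, Kp psi -> linear_functional VE psi /\ continuous t R_topology psi) ->
  quasi_convex VE t (fun y => forall psi, Kp psi -> Rabs (psi y) <= eps).
Proof.
  intros He HK g Hg.
  apply not_all_ex_not in Hg. destruct Hg as [psi Hpsi].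
  apply imply_to_and in Hpsi. destruct Hpsi as [Kpsi Hgt]. apply Rnot_le_lt in Hgt.
  set (m := Rmax (2 * eps) (Rabs (psi g))).
  assert (Hm1 : 2 * eps <= m) by apply Rmax_l.
  assert (Hm2 : Rabs (psi g) <= m) by apply Rmax_r.
  assert (Hm3 : Rabs (psi g) < 2 * m).
  { unfold m, Rmax. destruct (Rle_dec (2 * eps) (Rabs (psi g))); lra. }
  assert (Hm4 : m < 2 * Rabs (psi g)).
  { unfold m, Rmax. destruct (Rle_dec (2 * eps) (Rabs (psi g))); lra. }
  set (a := / (2 * m)).
  assert (Ha : a > 0) by (unfold a; apply Rinv_0_lt_compat; lra).
  destruct (HK psi Kpsi) as [Hl Hc].
  exists (fun v => ee (a * psi v)). split; [apply char_of_lf; auto| split].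
  - intros y Hy. specialize (Hy psi Kpsi). simpl. apply cos_ge_0.
    + assert (Rabs (a * psi y) <= / 4).
      { rewrite Rabs_mult, (Rabs_pos_eq a) by lra.
        apply (Rle_trans _ (a * eps)); [apply Rmult_le_compat_l; lra|].
        unfold a. apply (Rmult_le_reg_l (2 * m)); [lra|]. field_simplify; lra. }
      revert H; unfold Rabs; destruct (Rcase_abs _); intro H; pose proof PI_RGT_0; nra.
    + assert (Rabs (a * psi y) <= / 4).
      { rewrite Rabs_mult, (Rabs_pos_eq a) by lra.
        apply (Rle_trans _ (a * eps)); [apply Rmult_le_compat_l; lra|].
        unfold a. apply (Rmult_le_reg_l (2 * m)); [lra|]. field_simplify; lra. }
      revert H; unfold Rabs; destruct (Rcase_abs _); intro H; pose proof PI_RGT_0; nra.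
  - simpl. intro Hcos.
    assert (Hr : / 4 < Rabs (a * psi g) <= / 2).
    { rewrite Rabs_mult, (Rabs_pos_eq a) by lra. unfold a. split.
      - apply (Rmult_lt_reg_l (4 * m)); [lra|]. field_simplify; lra.
      - apply (Rmult_le_reg_l (2 * m)); [lra|]. field_simplify; lra. }
    pose proof PI_RGT_0. pose proof Rlt_PI_3PI2.
    destruct (Rle_lt_dec 0 (a * psi g)) as [Hs|Hs].
    + rewrite Rabs_pos_eq in Hr by lra.
      assert (cos (2 * PI * (a * psi g)) < 0) by (apply cos_lt_0; nra). lra.
    + rewrite Rabs_left in Hr by lra.
      rewrite <- cos_neg in Hcos.
      assert (cos (- (2 * PI * (a * psi g))) < 0) by (apply cos_lt_0; nra). lra.
Qed.

End Chars.


Lemma spt_eq (x y : s_pt) : proj1_sig x = proj1_sig y -> x = y.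
Proof. destruct x as [x hx], y as [y hy]; simpl; intros ->. f_equal. apply proof_irrelevance. Qed.

Definition pt (n : nat) : s_pt :=
  exist in_s (/ INR (S n)) (or_intror (ex_intro _ (S n) (conj (le_n_S 0 n (Nat.le_0_l n)) eq_refl))).
Definition pt0 : s_pt := exist in_s 0 (or_introl eq_refl).

Lemma s_open_char (U : s_pt -> Prop) : open s_topology U <->
  (forall x, U x -> exists d, d > 0 /\ forall y : s_pt, Rabs (proj1_sig y - proj1_sig x) < d -> U y).
Proof.
  split.
  - intros [V [HV EV]] x Ux. apply EV in Ux. destruct (HV _ Ux) as [e [He H]].
    exists e. split; auto. intros y Hy. apply EV. apply H. exact Hy.
  - intros H. exists (fun r => exists x, U x /\ exists d, d > 0 /\
        (forall y : s_pt, Rabs (proj1_sig y - proj1_sig x) < d -> U y) /\ Rabs (r - proj1_sig x) < d).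
    split.
    + intros r [x [Ux [d [Hd [Hy Hr]]]]]. exists (d - Rabs (r - proj1_sig x)). split; [lra|].
      intros z Hz. exists x. split; auto. exists d. split; auto. split; auto.
      pose proof (Rabs_triang (z - r) (r - proj1_sig x)). replace (z - r + (r - proj1_sig x)) with (z - proj1_sig x) in H0 by ring. lra.
    + intro y. split.
      * intro Uy. destruct (H y Uy) as [d [Hd Hdy]]. exists y. split; auto. exists d. split; auto. split; auto.
        rewrite Rminus_diag, Rabs_R0; lra.
      * intros [x [Ux [d [Hd [Hy Hr]]]]]. apply Hy. exact Hr.
Qed.

Lemma isolate (k : nat) (y : s_pt) : (1 <= k)%nat ->
  Rabs (proj1_sig y - / INR k) < / (INR k * (INR k + 1)) -> proj1_sig y = / INR k.
Proof.
  intros Hk H. assert (Hp : 1 <= INR k) by (apply (le_INR 1); exact Hk).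
  destruct (proj2_sig y) as [H0 | [k' [Hk' Hy]]].
  - exfalso. rewrite H0, Rminus_0_l, Rabs_Ropp, Rabs_pos_eq in H by (left; apply Rinv_0_lt_compat; lra).
    assert (/ INR k <= / (INR k * (INR k + 1))) by lra.
    apply Rinv_le_contravar in H1; [|apply Rinv_0_lt_compat; nra].
    rewrite !Rinv_inv in H1. nra.
  - rewrite Hy in *. destruct (Nat.eq_dec k' k) as [->|Hne]; [reflexivity|exfalso].
    assert (Hq : 1 <= INR k') by (apply (le_INR 1); exact Hk').
    set (a := INR k') in *. set (p := INR k) in *.
    assert (E : Rabs (/ a - / p) = Rabs (p - a) / (a * p)).
    { replace (/ a - / p) with ((p - a) / (a * p)) by (field; lra).
      unfold Rdiv. rewrite Rabs_mult, (Rabs_pos_eq (/ (a * p))) by (left; apply Rinv_0_lt_compat; nra). reflexivity. }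
    rewrite E in H.
    assert (H2 : Rabs (p - a) < a / (p + 1)).
    { apply (Rmult_lt_compat_r (a * p)) in H; [|nra].
      replace (Rabs (p - a) / (a * p) * (a * p)) with (Rabs (p - a)) in H by (field; nra).
      replace (/ (p * (p + 1)) * (a * p)) with (a / (p + 1)) in H by (field; nra). exact H. }
    apply (Rmult_lt_compat_r (p + 1)) in H2; [|lra].
    replace (a / (p + 1) * (p + 1)) with a in H2 by (field; lra).
    destruct (Nat.lt_ge_cases k' k) as [Hlt|Hge].
    + assert (a + 1 <= p) by (unfold a, p; rewrite <- S_INR; apply le_INR; lia).
      rewrite Rabs_pos_eq in H2 by lra. nra.
    + assert (p + 1 <= a) by (unfold a, p; rewrite <- S_INR; apply le_INR; lia).
      rewrite Rabs_left in H2 by lra. nra.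
Qed.

Lemma inv_lt_small (d : R) : d > 0 -> exists N : nat, forall n, (N <= n)%nat -> / INR (S n) < d.
Proof.
  intros Hd. destruct (arch_nat (/ d)) as [N HN]. exists N. intros n Hn.
  assert (INR N <= INR n) by (apply le_INR; exact Hn). rewrite S_INR.
  assert (0 < / d) by (apply Rinv_0_lt_compat; lra).
  rewrite <- (Rinv_inv d). apply Rinv_lt_contravar; [nra| lra].
Qed.

Lemma seq_cont (g : s_pt -> R) :
  (forall eps, eps > 0 -> exists N, forall n, (N <= n)%nat -> Rabs (g (pt n) - g pt0) < eps) ->
  continuous s_topology R_topology g.
Proof.
  intros Hs V HV. apply s_open_char. intros x Vx.
  destruct (proj2_sig x) as [H0 | [k [Hk Hx]]].
  - assert (Ex : x = pt0) by (apply spt_eq; exact H0). subst x.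
    destruct (HV _ Vx) as [e [He HeV]]. destruct (Hs e He) as [N HN].
    exists (/ INR (S N)). split; [apply Rinv_0_lt_compat; apply lt_0_INR; lia|].
    intros y Hy. cbn [proj1_sig pt0] in Hy. rewrite Rminus_0_r in Hy.
    destruct (proj2_sig y) as [Hy0 | [k' [Hk' Hy']]].
    + assert (y = pt0) by (apply spt_eq; exact Hy0). subst y. exact Vx.
    + assert (Eq : y = pt (pred k')) by (apply spt_eq; cbn [proj1_sig pt]; rewrite Hy'; do 2 f_equal; lia).
      rewrite Eq. apply HeV. apply HN.
      rewrite Hy' in Hy. rewrite Rabs_pos_eq in Hy by (left; apply Rinv_0_lt_compat; apply lt_0_INR; lia).
      destruct (Nat.le_gt_cases N (pred k')) as [|Hlt]; [auto|exfalso].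
      assert (INR k' <= INR (S N)) by (apply le_INR; lia).
      assert (0 < INR k') by (apply lt_0_INR; lia).
      apply Rinv_le_contravar in H; [lra|auto].
  - exists (/ (INR k * (INR k + 1))). split.
    + assert (1 <= INR k) by (apply (le_INR 1); exact Hk). apply Rinv_0_lt_compat. nra.
    + intros y Hy. rewrite Hx in Hy. pose proof (isolate k y Hk Hy).
      assert (y = x) by (apply spt_eq; rewrite Hx; exact H). subst. exact Vx.
Qed.

Lemma cont_seq (g : s_pt -> R) : continuous s_topology R_topology g ->
  forall eps, eps > 0 -> exists N, forall n, (N <= n)%nat -> Rabs (g (pt n) - g pt0) < eps.
Proof.
  intros Hg eps He. pose proof (Hg _ (ball_open (g pt0) eps)) as HO.
  destruct (proj1 (s_open_char _) HO pt0) as [d [Hd Hdy]].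
  { cbv beta. rewrite Rminus_diag, Rabs_R0; lra. } destruct (inv_lt_small d Hd) as [N HN]. exists N.
  intros n Hn. apply Hdy. cbn [proj1_sig pt pt0]. rewrite Rminus_0_r, Rabs_pos_eq; [apply HN; auto|].
  left; apply Rinv_0_lt_compat; apply lt_0_INR; lia.
Qed.

Section Sub.
Context {E : Type} (VE : vector_space E) (S : E -> Prop)
  (S0 : S (vzero VE)) (Sadd : forall x y, S x -> S y -> S (vadd VE x y))
  (Sopp : forall x, S x -> S (vopp VE x)) (Sscal : forall a x, S x -> S (vscal VE a x)).

Lemma sub_eq (x y : {v | S v}) : proj1_sig x = proj1_sig y -> x = y.
Proof. destruct x as [x hx], y as [y hy]; simpl; intros ->. f_equal. apply proof_irrelevance. Qed.

Definition Vsub : vector_space {v | S v}.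
Proof.
  refine {| vzero := exist _ _ S0;
            vadd := fun x y => exist _ _ (Sadd _ _ (proj2_sig x) (proj2_sig y));
            vopp := fun x => exist _ _ (Sopp _ (proj2_sig x));
            vscal := fun a x => exist _ _ (Sscal a _ (proj2_sig x)) |};
  intros; apply sub_eq; simpl.
  - apply vadd_assoc.
  - apply vadd_comm.
  - apply vadd_0.
  - apply vadd_opp.
  - apply vscal_1.
  - apply vscal_assoc.
  - apply vscal_distr_v.
  - apply vscal_distr_s.
Defined.
End Sub.


Definition fc (n : nat) (x : s_pt) : R := if Req_EM_T (proj1_sig x) (/ INR (S n)) then 1 else 0.

Lemma fc_pt n m : fc n (pt m) = if Nat.eq_dec m n then 1 else 0.
Proof.
  unfold fc. cbn [proj1_sig pt]. destruct (Req_EM_T _ _) as [E|E]; destruct (Nat.eq_dec m n) as [->|Hn]; auto.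
  - exfalso. apply Hn. apply Rinv_eq_reg in E.
    apply INR_eq in E. lia.
  - exfalso. auto.
Qed.

Lemma fc_pt0 n : fc n pt0 = 0.
Proof.
  unfold fc. cbn [proj1_sig pt0]. destruct (Req_EM_T _ _) as [E|E]; auto.
  exfalso. assert (0 < / INR (S n)) by (apply Rinv_0_lt_compat; apply lt_0_INR; lia). lra.
Qed.

Lemma fc_cont n : continuous s_topology R_topology (fc n).
Proof.
  apply seq_cont. intros eps He. exists (S n). intros m Hm.
  rewrite fc_pt, fc_pt0. destruct (Nat.eq_dec m n); [lia|]. rewrite Rminus_diag, Rabs_R0; lra.
Qed.

Lemma cont_comp {A B C} (ta : topology A) (tb : topology B) (tc : topology C) f g :
  continuous ta tb f -> continuous tb tc g -> continuous ta tc (fun x => g (f x)).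
Proof. intros Hf Hg V HV. exact (Hf _ (Hg V HV)). Qed.

Section Free.
Context {L : Type} (VL : vector_space L) (tau : topology L) (i : s_pt -> L)
  (Hfree : free_lcs s_topology VL tau i).

Lemma tau_lc : locally_convex VL tau.
Proof. exact (proj1 Hfree). Qed.
Lemma tau_vt : vector_topology VL tau.
Proof. exact (proj1 tau_lc). Qed.
Lemma i_cont : continuous s_topology tau i.
Proof. exact (proj1 (proj2 Hfree)). Qed.

Lemma ex_c n : exists g : L -> R, Defs.linear VL VR g /\ continuous tau R_topology g /\ forall x, g (i x) = fc n x.
Proof.
  destruct (proj2 (proj2 Hfree) R VR R_topology lc_R (fc n) (fc_cont n)) as [g [Hg _]].
  exists g. exact Hg.
Qed.

Definition cn (n : nat) : L -> R := proj1_sig (constructive_indefinite_description _ (ex_c n)).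

Lemma cn_spec n : linear_functional VL (cn n) /\ continuous tau R_topology (cn n) /\ forall x, cn n (i x) = fc n x.
Proof. unfold cn. destruct (constructive_indefinite_description _ (ex_c n)) as [g Hg]. exact Hg. Qed.

Lemma cn_lin n : linear_functional VL (cn n). Proof. apply cn_spec. Qed.
Lemma cn_cont n : continuous tau R_topology (cn n). Proof. apply cn_spec. Qed.
Lemma cn_i n x : cn n (i x) = fc n x. Proof. apply cn_spec. Qed.

Lemma ext_cont f : linear_functional VL f -> continuous s_topology R_topology (fun x => f (i x)) ->
  continuous tau R_topology f.
Proof.
  intros Hl Hc.
  destruct (proj2 (proj2 Hfree) R VR R_topology lc_R _ Hc) as [g [[Hgl [Hgc Hgi]] _]].
  destruct (proj2 (proj2 Hfree) R VR (indisc R) (lc_indisc VR) (fun x => f (i x)) (cont_indisc _ _)) as [g0 [_ Hu]].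
  assert (E1 : forall v, f v = g0 v) by (apply Hu; [exact Hl | apply cont_indisc | auto]).
  assert (E2 : forall v, g v = g0 v) by (apply Hu; [exact Hgl | apply cont_indisc | auto]).
  intros V HV. apply (open_ext tau (fun x => V (g x))); [intro x; rewrite E1, <- E2; tauto | apply Hgc; auto].
Qed.

Lemma good_comp f : continuous tau R_topology f -> continuous s_topology R_topology (fun x => f (i x)).
Proof. intro Hf. apply (cont_comp _ tau); [apply i_cont | exact Hf]. Qed.

Definition Bdd (v : L) : Prop := exists M, forall n, Rabs (cn n v) <= M.

Lemma bdd_coeff v : Bdd v.
Proof.
  assert (S0 : Bdd (vzero VL)) by (exists 0; intro n; rewrite lf_zero by apply cn_lin; rewrite Rabs_R0; lra).
  assert (Sadd : forall x y, Bdd x -> Bdd y -> Bdd (vadd VL x y)).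
  { intros x y [M1 H1] [M2 H2]. exists (M1 + M2). intro n. rewrite (proj1 (cn_lin n)).
    pose proof (Rabs_triang (cn n x) (cn n y)). specialize (H1 n); specialize (H2 n). lra. }
  assert (Sopp : forall x, Bdd x -> Bdd (vopp VL x)).
  { intros x [M H]. exists M. intro n. rewrite lf_opp, Rabs_Ropp by apply cn_lin. apply H. }
  assert (Sscal : forall a x, Bdd x -> Bdd (vscal VL a x)).
  { intros a x [M H]. exists (Rabs a * M). intro n. rewrite (proj2 (cn_lin n)), Rabs_mult.
    apply Rmult_le_compat_l; [apply Rabs_pos| apply H]. }
  assert (Si : forall x, Bdd (i x)).
  { intro x. exists 1. intro n. rewrite cn_i. unfold fc. destruct (Req_EM_T _ _); rewrite ?Rabs_R1, ?Rabs_R0; lra. }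
  set (VS := Vsub VL Bdd S0 Sadd Sopp Sscal).
  destruct (proj2 (proj2 Hfree) _ VS (indisc _) (lc_indisc VS) (fun x => exist Bdd (i x) (Si x)) (cont_indisc _ _))
    as [g [[Hgl [_ Hgi]] _]].
  destruct (proj2 (proj2 Hfree) _ VL (indisc L) (lc_indisc VL) i (cont_indisc _ _)) as [g0 [_ Hu]].
  assert (E1 : forall w, w = g0 w).
  { apply (Hu (fun w => w)); [split; auto | apply cont_indisc | auto]. }
  assert (E2 : forall w, proj1_sig (g w) = g0 w).
  { apply Hu; [| apply cont_indisc |].
    - split.
      + intros x y. rewrite (proj1 Hgl). reflexivity.
      + intros a x. rewrite (proj2 Hgl). reflexivity.
    - intro x. rewrite Hgi. reflexivity. }
  rewrite (E1 v), <- E2. exact (proj2_sig (g v)).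
Qed.

End Free.


Lemma list_bound {L} (Phi : list (L -> R)) x : exists M, 0 <= M /\ forall phi, In phi Phi -> Rabs (phi x) <= M.
Proof.
  induction Phi as [|f Phi IH].
  - exists 0. split; [lra| intros phi []].
  - destruct IH as [M [HM H]]. exists (M + Rabs (f x)). split; [pose proof (Rabs_pos (f x)); lra|].
    intros phi [<-|Hin]; [pose proof (Rabs_pos (f x)); lra|]. specialize (H phi Hin). pose proof (Rabs_pos (f x)); lra.
Qed.

Section Nu.
Context {L : Type} (VL : vector_space L) (tau : topology L) (i : s_pt -> L)
  (Hfree : free_lcs s_topology VL tau i).

Local Notation c := (cn VL tau i Hfree).

Definition good (phi : L -> R) := linear_functional VL phi /\ continuous tau R_topology phi.
Definition goodl (Phi : list (L -> R)) := forall phi, In phi Phi -> good phi.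
Definition KK (Phi : list (L -> R)) (psi : L -> R) := In psi Phi \/ exists n, psi = c n.
Definition Bl (Phi : list (L -> R)) (x : L) (eps : R) (y : L) :=
  exists r, r < eps /\ forall psi, KK Phi psi -> Rabs (psi y - psi x) <= r.
Definition nu_open (U : L -> Prop) :=
  forall x, U x -> exists Phi, goodl Phi /\ exists eps, eps > 0 /\ forall y, Bl Phi x eps y -> U y.

Definition nu : topology L.
Proof.
  refine {| open := nu_open |}.
  - intros x _. exists nil. split; [intros phi []|]. exists 1. split; [lra| auto].
  - intros U V HU HV x [Ux Vx].
    destruct (HU x Ux) as [P1 [G1 [e1 [He1 H1]]]]. destruct (HV x Vx) as [P2 [G2 [e2 [He2 H2]]]].
    exists (P1 ++ P2). split.
    + intros phi Hin. apply in_app_or in Hin. destruct Hin; auto.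
    + exists (Rmin e1 e2). split; [apply Rmin_glb_lt; lra|].
      intros y [r [Hr Hy]]. split.
      * apply H1. exists r. split; [pose proof (Rmin_l e1 e2); lra|].
        intros psi [Hin|Hn]; apply Hy; [left; apply in_or_app; auto| right; auto].
      * apply H2. exists r. split; [pose proof (Rmin_r e1 e2); lra|].
        intros psi [Hin|Hn]; apply Hy; [left; apply in_or_app; auto| right; auto].
  - intros I F HF x [j Hj]. destruct (HF j x Hj) as [P [G [e [He H]]]].
    exists P. split; auto. exists e. split; auto. intros y Hy. exists j. auto.
Defined.

Lemma KK_good Phi psi : goodl Phi -> KK Phi psi -> good psi.
Proof.
  intros G [Hin|[n ->]]; [auto|]. split; [apply cn_lin | apply cn_cont].
Qed.

Lemma r_nonneg Phi x y r : (forall psi, KK Phi psi -> Rabs (psi y - psi x) <= r) -> 0 <= r.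
Proof. intro H. pose proof (H (c 0) (or_intror (ex_intro _ 0%nat eq_refl))). pose proof (Rabs_pos (c 0 y - c 0 x)). lra. Qed.

Lemma Bl_center Phi x eps : eps > 0 -> Bl Phi x eps x.
Proof. intro He. exists 0. split; [lra|]. intros. rewrite Rminus_diag, Rabs_R0; lra. Qed.

Lemma Bl_open Phi x eps : goodl Phi -> open nu (Bl Phi x eps).
Proof.
  intros G y [r [Hr Hy]]. exists Phi. split; auto. exists (eps - r). split; [lra|].
  intros z [r' [Hr' Hz]]. exists (r + r'). split; [lra|].
  intros psi Hpsi. specialize (Hy psi Hpsi). specialize (Hz psi Hpsi).
  pose proof (Rabs_triang (psi z - psi y) (psi y - psi x)).
  replace (psi z - psi y + (psi y - psi x)) with (psi z - psi x) in H by ring. lra.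
Qed.

Lemma KK_bound Phi x : exists M, 0 <= M /\ forall psi, KK Phi psi -> Rabs (psi x) <= M.
Proof.
  destruct (list_bound Phi x) as [M2 [HM2 H2]]. destruct (bdd_coeff VL tau i Hfree x) as [M1 H1].
  exists (M2 + Rabs M1). split; [pose proof (Rabs_pos M1); lra|].
  intros psi [Hin|[n ->]].
  - specialize (H2 _ Hin). pose proof (Rabs_pos M1). lra.
  - specialize (H1 n). pose proof (Rle_abs M1). lra.
Qed.

Lemma lc_nu : locally_convex VL nu.
Proof.
  split; [split|].
  - intros x y W HW Wxy. destruct (HW _ Wxy) as [P [G [e [He H]]]].
    exists (Bl P x (e / 2)), (Bl P y (e / 2)).
    split; [apply Bl_open; auto|]. split; [apply Bl_center; lra|].
    split; [apply Bl_open; auto|]. split; [apply Bl_center; lra|].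
    intros u v [r1 [Hr1 Hu]] [r2 [Hr2 Hv]]. apply H. exists (r1 + r2). split; [lra|].
    intros psi Hpsi. destruct (KK_good _ _ G Hpsi) as [[Ha _] _].
    rewrite !Ha. specialize (Hu _ Hpsi). specialize (Hv _ Hpsi).
    pose proof (Rabs_triang (psi u - psi x) (psi v - psi y)).
    replace (psi u - psi x + (psi v - psi y)) with (psi u + psi v - (psi x + psi y)) in H0 by ring. lra.
  - intros a x W HW Wax. destruct (HW _ Wax) as [P [G [e [He H]]]].
    destruct (KK_bound P x) as [M [HM HMb]].
    exists (Rmin 1 (e / (2 * (M + 1)))), (Bl P x (e / (2 * (Rabs a + 1)))).
    assert (0 < e / (2 * (M + 1))) by (apply Rdiv_lt_0_compat; lra).
    assert (0 < e / (2 * (Rabs a + 1))) by (pose proof (Rabs_pos a); apply Rdiv_lt_0_compat; lra).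
    split; [apply Rmin_glb_lt; lra|]. split; [apply Bl_open; auto|]. split; [apply Bl_center; lra|].
    intros b u Hb [r [Hr Hu]]. apply H.
    pose proof (r_nonneg _ _ _ _ Hu) as Hr0.
    exists (Rabs b * r + Rabs (b - a) * M). split; [apply scal_estimate; auto|].
    intros psi Hpsi. destruct (KK_good _ _ G Hpsi) as [[_ Hs] _]. rewrite !Hs.
    pose proof (Rabs_scal_diff a b (psi u) (psi x)).
    specialize (Hu _ Hpsi). specialize (HMb _ Hpsi).
    assert (Rabs b * Rabs (psi u - psi x) <= Rabs b * r) by (apply Rmult_le_compat_l; [apply Rabs_pos| auto]).
    assert (Rabs (b - a) * Rabs (psi x) <= Rabs (b - a) * M) by (apply Rmult_le_compat_l; [apply Rabs_pos| auto]).
    lra.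
  - intros W HW W0. destruct (HW _ W0) as [P [G [e [He H]]]].
    exists (Bl P (vzero VL) e). split; [|split].
    + intros x y t [r1 [Hr1 Hx]] [r2 [Hr2 Hy]] Ht. exists (Rmax r1 r2). split; [apply Rmax_lub_lt; auto|].
      intros psi Hpsi. destruct (KK_good _ _ G Hpsi) as [Hl _].
      specialize (Hx _ Hpsi). specialize (Hy _ Hpsi). rewrite (lf_zero VL psi Hl) in *.
      rewrite (proj1 Hl), !(proj2 Hl). rewrite Rminus_0_r in *.
      pose proof (Rabs_triang (t * psi x) ((1 - t) * psi y)). rewrite !Rabs_mult in H0.
      rewrite (Rabs_pos_eq t), (Rabs_pos_eq (1 - t)) in H0 by lra.
      pose proof (Rmax_l r1 r2). pose proof (Rmax_r r1 r2).
      assert (t * Rabs (psi x) <= t * Rmax r1 r2) by (apply Rmult_le_compat_l; lra).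
      assert ((1 - t) * Rabs (psi y) <= (1 - t) * Rmax r1 r2) by (apply Rmult_le_compat_l; lra).
      lra.
    + exists (Bl P (vzero VL) e). split; [apply Bl_open; auto|]. split; [apply Bl_center; auto| auto].
    + exact H.
Qed.

End Nu.


Section Main.
Context {L : Type} (VL : vector_space L) (tau : topology L) (i : s_pt -> L)
  (Hfree : free_lcs s_topology VL tau i).

Local Notation c := (cn VL tau i Hfree).
Local Notation nu := (nu VL tau i Hfree).
Local Notation Bl := (Bl VL tau i Hfree).
Local Notation KK := (KK VL tau i Hfree).
Local Notation good := (good VL tau).
Local Notation goodl := (goodl VL tau).

Lemma nu_openE U : open nu U <-> nu_open VL tau i Hfree U.
Proof. split; intro H; exact H. Qed.

Lemma compat_fwd f : good f -> continuous nu R_topology f.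
Proof.
  intros Gf V HV. apply nu_openE. intros x Vx. destruct (HV _ Vx) as [e [He HeV]].
  exists (f :: nil). split.
  - intros phi [<-|[]]. exact Gf.
  - exists e. split; auto. intros y [r [Hr Hy]]. apply HeV.
    specialize (Hy f (or_introl (or_introl eq_refl))). lra.
Qed.

Lemma list_conv Phi : goodl Phi -> forall eta, eta > 0 -> exists N, forall phi, In phi Phi ->
  forall n, (N <= n)%nat -> Rabs (phi (i (pt n)) - phi (i pt0)) < eta.
Proof.
  induction Phi as [|f Phi IH]; intros G eta He.
  - exists 0%nat. intros phi [].
  - destruct (IH (fun phi Hin => G phi (or_intror Hin)) eta He) as [N1 H1].
    destruct (cont_seq _ (good_comp VL tau i Hfree f (proj2 (G f (or_introl eq_refl)))) eta He) as [N2 H2].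
    exists (Nat.max N1 N2). intros phi [<-|Hin] n Hn.
    + apply H2. lia.
    + apply H1; auto. lia.
Qed.

Definition dd (n : nat) : L := vadd VL (i (pt n)) (vopp VL (i pt0)).

Lemma c_dd m n : c m (dd n) = if Nat.eq_dec n m then 1 else 0.
Proof.
  unfold dd. rewrite lf_sub by apply cn_lin. rewrite !cn_i, fc_pt, fc_pt0. destruct (Nat.eq_dec n m); ring.
Qed.

Lemma compat_bwd f : linear_functional VL f -> continuous nu R_topology f -> continuous tau R_topology f.
Proof.
  intros Hl Hc. apply (ext_cont VL tau i Hfree f Hl). apply seq_cont. intros eps He.
  apply NNPP. intro Hn.
  assert (Hinf : forall N, exists n, (N <= n)%nat /\ eps <= Rabs (f (i (pt n)) - f (i pt0))).
  { intro N. apply NNPP. intro Hn2. apply Hn. exists N. intros n Hn3.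
    apply Rnot_le_lt. intro Hle. apply Hn2. exists n. auto. }
  pose proof (Hc _ (ball_open (f (vzero VL)) eps)) as HO. apply nu_openE in HO.
  destruct (HO (vzero VL)) as [P [G [eta [Heta Hb]]]]; [cbv beta; rewrite Rminus_diag, Rabs_R0; lra|].
  destruct (list_conv P G (eta / 2) ltac:(lra)) as [N0 HN0].
  assert (Hf0 : f (vzero VL) = 0) by (apply lf_zero; auto).
  assert (HP : forall k : nat, exists v M, INR k * eps <= f v /\
             (forall phi, In phi P -> Rabs (phi v) <= INR k * (eta / 2)) /\
             (forall m, Rabs (c m v) <= 1) /\ (forall m, (M <= m)%nat -> c m v = 0)).
  { induction k as [|k IH].
    - exists (vzero VL), 0%nat. simpl. rewrite Hf0. split; [lra|]. split; [|split].
      + intros phi Hin. rewrite lf_zero by (apply (G phi Hin)). rewrite Rabs_R0; lra.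
      + intro m. rewrite lf_zero by apply cn_lin. rewrite Rabs_R0; lra.
      + intros m _. apply lf_zero, cn_lin.
    - destruct IH as [v [M [H1 [H2 [H3 H4]]]]].
      destruct (Hinf (Nat.max M N0)) as [n [Hn1 Hn2]].
      set (a := f (i (pt n)) - f (i pt0)).
      set (sg := if Rle_dec 0 a then 1 else -1).
      assert (Hsa : sg * a = Rabs a) by (unfold sg; destruct (Rle_dec 0 a); [rewrite Rabs_pos_eq by lra| rewrite Rabs_left by lra]; ring).
      assert (Hsg : Rabs sg = 1) by (unfold sg; destruct (Rle_dec 0 a); [apply Rabs_R1 | rewrite Rabs_left by lra; lra]).
      exists (vadd VL v (vscal VL sg (dd n))), (S n). rewrite S_INR. split; [|split; [|split]].
      + rewrite Rmult_plus_distr_r, Rmult_1_l.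
        rewrite (proj1 Hl), (proj2 Hl). unfold dd. rewrite lf_sub by exact Hl. fold a. fold a in Hn2. lra.
      + intros phi Hin. rewrite Rmult_plus_distr_r, Rmult_1_l. destruct (G phi Hin) as [Hpl _].
        rewrite (proj1 Hpl), (proj2 Hpl). unfold dd. rewrite lf_sub by exact Hpl.
        pose proof (Rabs_triang (phi v) (sg * (phi (i (pt n)) - phi (i pt0)))).
        rewrite Rabs_mult, Hsg in H. specialize (H2 _ Hin).
        assert (Rabs (phi (i (pt n)) - phi (i pt0)) < eta / 2) by (apply HN0; auto; lia). lra.
      + intro m. rewrite (proj1 (cn_lin _ _ _ _ m)), (proj2 (cn_lin _ _ _ _ m)), c_dd.
        destruct (Nat.eq_dec n m) as [<-|Hnm].
        * rewrite H4 by lia. rewrite Rplus_0_l, Rmult_1_r, Hsg. lra.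
        * rewrite Rmult_0_r, Rplus_0_r. apply H3.
      + intros m Hm. rewrite (proj1 (cn_lin _ _ _ _ m)), (proj2 (cn_lin _ _ _ _ m)), c_dd.
        destruct (Nat.eq_dec n m); [lia|]. rewrite H4 by lia. ring. }
  destruct (arch_nat (2 / eta)) as [K HK].
  assert (HK0 : 0 < INR K) by (assert (0 < 2 / eta) by (apply Rdiv_lt_0_compat; lra); lra).
  destruct (HP K) as [v [M [H1 [H2 [H3 _]]]]].
  set (w := vscal VL (/ INR K) v).
  assert (Hw : Bl P (vzero VL) eta w).
  { exists (eta / 2). split; [lra|]. intros psi [Hin|[m ->]].
    - destruct (G psi Hin) as [Hpl _]. rewrite (lf_zero VL psi Hpl), Rminus_0_r. unfold w. rewrite (proj2 Hpl).
      rewrite Rabs_mult, Rabs_inv, (Rabs_pos_eq (INR K)) by lra.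
      specialize (H2 _ Hin). apply (Rmult_le_reg_l (INR K)); [lra|].
      replace (INR K * (/ INR K * Rabs (psi v))) with (Rabs (psi v)) by (field; lra). lra.
    - rewrite (lf_zero VL _ (cn_lin _ _ _ _ m)), Rminus_0_r. unfold w. rewrite (proj2 (cn_lin _ _ _ _ m)).
      rewrite Rabs_mult, Rabs_inv, (Rabs_pos_eq (INR K)) by lra.
      specialize (H3 m). apply (Rmult_le_reg_l (INR K)); [lra|].
      replace (INR K * (/ INR K * Rabs (c m v))) with (Rabs (c m v)) by (field; lra).
      apply (Rmult_lt_compat_r (eta / 2)) in HK; [|lra].
      replace (2 / eta * (eta / 2)) with 1 in HK by (field; lra). lra. }
  specialize (Hb w Hw). cbv beta in Hb. rewrite Hf0, Rminus_0_r in Hb.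
  unfold w in Hb. rewrite (proj2 Hl) in Hb. rewrite Rabs_mult, Rabs_inv, (Rabs_pos_eq (INR K)) in Hb by lra.
  assert (Hfv : INR K * eps <= Rabs (f v)) by (pose proof (Rle_abs (f v)); lra).
  apply (Rmult_lt_compat_l (INR K)) in Hb; [|lra].
  replace (INR K * (/ INR K * Rabs (f v))) with (Rabs (f v)) in Hb by (field; lra). lra.
Qed.

Lemma compat : lc_compatible VL tau nu.
Proof.
  intros f Hl. split.
  - intro Hc. apply compat_fwd. split; auto.
  - apply compat_bwd; auto.
Qed.

Lemma not_coarser : ~ coarser nu tau.
Proof.
  intro Hco.
  assert (HU : open nu (Bl nil (vzero VL) 1)) by (apply Bl_open; intros phi []).
  apply Hco in HU.
  pose proof (i_cont VL tau i Hfree _ (affine_open VL tau (tau_vt VL tau i Hfree) _ 1 (vopp VL (i pt0)) HU)) as HO.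
  destruct (proj1 (s_open_char _) HO pt0) as [d [Hd Hdy]].
  { cbv beta. rewrite (vadd_opp _ VL), (vscal_1 _ VL). apply Bl_center. lra. }
  destruct (inv_lt_small d Hd) as [N HN].
  specialize (Hdy (pt N)). cbv beta in Hdy.
  destruct Hdy as [r [Hr Hy]].
  - cbn [proj1_sig pt pt0]. rewrite Rminus_0_r, Rabs_pos_eq; [apply HN; auto|].
    left; apply Rinv_0_lt_compat; apply lt_0_INR; lia.
  - specialize (Hy (c N) (or_intror (ex_intro _ N eq_refl))).
    rewrite (vscal_1 _ VL) in Hy. fold (dd N) in Hy. rewrite c_dd, (lf_zero VL _ (cn_lin _ _ _ _ N)) in Hy.
    destruct (Nat.eq_dec N N); [|lia]. rewrite Rminus_0_r, Rabs_R1 in Hy. lra.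
Qed.

Lemma not_mackey_space : ~ mackey_space VL tau.
Proof.
  intro Hm. apply not_coarser. apply Hm; [apply lc_nu | apply compat].
Qed.

Lemma group_nu : group_topology VL nu.
Proof.
  split; [exact (proj1 (proj1 (lc_nu VL tau i Hfree)))|].
  intros V HV. apply nu_openE. intros x Vx.
  destruct (HV _ Vx) as [P [G [e [He H]]]]. exists P. split; auto. exists e. split; auto.
  intros y [r [Hr Hy]]. apply H. exists r. split; auto. intros psi Hpsi.
  destruct (KK_good _ _ _ _ _ _ G Hpsi) as [Hpl _]. rewrite !(lf_opp VL _ _ Hpl).
  replace (- psi y - - psi x) with (- (psi y - psi x)) by ring. rewrite Rabs_Ropp. auto.
Qed.

Lemma lqc_nu : locally_quasi_convex VL nu.
Proof.
  intros W HW W0. destruct (HW _ W0) as [P [G [e [He H]]]].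
  exists (fun y => forall psi, KK P psi -> Rabs (psi y) <= e / 2). split; [|split].
  - apply qc_ball; [lra|]. intros psi Hpsi. pose proof (KK_good _ _ _ _ _ _ G Hpsi) as Gp.
    split; [exact (proj1 Gp) | apply compat_fwd; exact Gp].
  - exists (Bl P (vzero VL) (e / 2)). split; [apply Bl_open; auto|]. split; [apply Bl_center; lra|].
    intros y [r [Hr Hy]] psi Hpsi. specialize (Hy _ Hpsi).
    rewrite (lf_zero VL _ (proj1 (KK_good _ _ _ _ _ _ G Hpsi))), Rminus_0_r in Hy. lra.
  - intros y Hy. apply H. exists (e / 2). split; [lra|]. intros psi Hpsi.
    rewrite (lf_zero VL _ (proj1 (KK_good _ _ _ _ _ _ G Hpsi))), Rminus_0_r. auto.
Qed.

Lemma gcompat : group_compatible VL tau nu.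
Proof.
  intro chi. split; intro Hchi.
  - destruct (char_lift VL tau (tau_vt VL tau i Hfree) chi Hchi) as [phi [Hl [Hc He]]].
    assert (E : chi = fun v => ee (1 * phi v)).
    { apply functional_extensionality. intro v. rewrite He, Rmult_1_l. reflexivity. }
    rewrite E. apply char_of_lf; auto. apply compat_fwd. split; auto.
  - destruct (char_lift VL nu (proj1 (lc_nu VL tau i Hfree)) chi Hchi) as [phi [Hl [Hc He]]].
    assert (E : chi = fun v => ee (1 * phi v)).
    { apply functional_extensionality. intro v. rewrite He, Rmult_1_l. reflexivity. }
    rewrite E. apply char_of_lf; auto. apply compat_bwd; auto.
Qed.

Lemma not_mackey_group : ~ mackey_group VL tau.
Proof.
  intro Hm. apply not_coarser. apply Hm; [apply group_nu | apply lqc_nu | apply gcompat].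
Qed.

End Main.

Theorem theorem1p1 :
  forall (L : Type) (VL : vector_space L) (tau : topology L) (i : s_pt -> L),
    free_lcs s_topology VL tau i ->
    ~ mackey_space VL tau /\ ~ mackey_group VL tau.
Proof.
  intros L VL tau i Hfree. split; [apply (not_mackey_space VL tau i Hfree) | apply (not_mackey_group VL tau i Hfree)].
Qed.
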